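(* Let $t$, $q$, $r$ be integers with $q \geq 0$ and $2 \leq r \leq t-1$, and suppose that $x = tq + r$ is odd. Then there exists a coloring of the edges of the complete graph $K_x$ with $t$ colors such that every vertex is incident with at least $q$ edges of each color. *)

(* Defs.v *)
From mathcomp Require Import all_boot all_order.
Set Implicit Arguments. Unset Strict Implicit. Unset Printing Implicit Defensive.

(* The complete graph K_x has vertex set 'I_x and edge set all 2-element
   subsets of vertices.  A t-edge-coloring assigns a colour in 'I_t to each
   edge, i.e. a function from 2-element sets to colours (values on sets that
   are not edges are irrelevant). *)
Definition edge_coloring (x t : nat) := {set 'I_x} -> 'I_t.

Definition color_degree (x t : nat) (c : edge_coloring x t) (v : 'I_x) (i : 'I_t) : nat :=
  #|[set u : 'I_x | (u != v) && (c [set u; v] == i)]|.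

(* Main.v *)
Require Import Defs.
From mathcomp Require Import all_boot all_order.
From mathcomp Require Import zify.
Set Implicit Arguments. Unset Strict Implicit.
Lemma modE1 a x : x <= a -> a < 2*x -> a %% x = a - x.
Proof.
move=> h1 h.
have -> : a = (a - x) + x by lia.
by rewrite modnDr modn_small; lia.
Qed.
Lemma modE0 a x : a < x -> a %% x = a.
Proof. exact: modn_small. Qed.

Definition Lab (x a b : nat) : nat :=
  let s := (a + b) %% x in
  if s == 0 then (2 * b) %% x
  else if s == 1 then (2 * (if a == 0 then b else a)) %% x
  else s.
Definition Lm x a b := Lab x (minn a b) (maxn a b).

Definition nb (x v s : nat) : nat :=
  if (2 * v) %% x == s then (if v <= x./2 then (x + 1 - v) %% x else x - v)
  else (s + x - v) %% x.

Lemma nb_spec x m v s : x = 2 * m + 1 -> v < x -> 2 <= s -> s < x ->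
  [/\ nb x v s < x, nb x v s != v,
      (nb x v s + v) %% x = (if (2 * v) %% x == s then (v <= m : nat) else s)
    & Lm x (nb x v s) v = s].
Proof.
move=> hx hv hs1 hs2.
have hm : x./2 = m by rewrite hx addn1 mul2n -add1n; exact: (half_bit_double m true).
rewrite /nb hm /Lm /Lab.
case: (ltnP (2 * v) x) => h2v.
- rewrite (@modE0 (2 * v) x h2v).
  case: eqP => hA.
  + have hvm : v <= m by lia.
    rewrite hvm.
    case: (ltnP 1 v) => hv2.
    * rewrite (@modE0 (x + 1 - v) x); last by lia.
      rewrite (@modE1 (x + 1 - v + v) x); [|lia|lia].
      have -> : minn (x + 1 - v) v + maxn (x + 1 - v) v = x + 1 by lia.
      rewrite (@modE1 (x + 1) x); [|lia|lia].
      have -> : x + 1 - x = 1 by lia.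
      have -> : minn (x + 1 - v) v = v by lia.
      have -> : (v == 0) = false by apply/eqP; lia.
      rewrite /= (@modE0 (2 * v) x h2v).
      split; [lia | apply/eqP; lia | lia | lia].
    * have v1 : v = 1 by lia.
      subst v.
      have -> : x + 1 - 1 = x by lia.
      rewrite modnn add0n /= (@modE0 1 x); last by lia.
      rewrite (@modE0 2 x); last by lia.
      split; [lia | by [] | by [] | by rewrite -hA].
  + have hne : (s + x - v) %% x != v.
      apply/eqP => E; apply: hA; move: E.
      case: (ltnP (s + x - v) x) => h3.
      * rewrite (@modE0 (s + x - v) x h3); lia.
      * rewrite (@modE1 (s + x - v) x h3); lia.
    have hsum : ((s + x - v) %% x + v) %% x = s.
      case: (ltnP (s + x - v) x) => h3.
      * rewrite (@modE0 (s + x - v) x h3) (@modE1 (s + x - v + v) x); lia.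
      * rewrite (@modE1 (s + x - v) x h3); last lia.
        have -> : s + x - v - x + v = s by lia.
        by rewrite modn_small.
    have hlt : (s + x - v) %% x < x by rewrite ltn_mod; lia.
    set u := (s + x - v) %% x in hne hsum hlt *.
    have -> : minn u v + maxn u v = u + v by lia.
    rewrite hsum.
    have -> : (s == 0) = false by apply/eqP; lia.
    have -> : (s == 1) = false by apply/eqP; lia.
    by split.
- rewrite (@modE1 (2 * v) x h2v); last by lia.
  case: eqP => hA.
  + have hvm : (v <= m) = false by apply/negbTE; rewrite -ltnNge; lia.
    rewrite hvm.
    have -> : x - v + v = x by lia.
    have -> : minn (x - v) v + maxn (x - v) v = x by lia.
    rewrite modnn /=.
    have -> : maxn (x - v) v = v by lia.
    rewrite (@modE1 (2 * v) x h2v); last by lia.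
    split; [lia | apply/eqP; lia | by [] | by []].
  + have hne : (s + x - v) %% x != v.
      apply/eqP => E; apply: hA; move: E.
      case: (ltnP (s + x - v) x) => h3.
      * rewrite (@modE0 (s + x - v) x h3); lia.
      * rewrite (@modE1 (s + x - v) x h3); lia.
    have hsum : ((s + x - v) %% x + v) %% x = s.
      case: (ltnP (s + x - v) x) => h3.
      * rewrite (@modE0 (s + x - v) x h3) (@modE1 (s + x - v + v) x); lia.
      * rewrite (@modE1 (s + x - v) x h3); last lia.
        have -> : s + x - v - x + v = s by lia.
        by rewrite modn_small.
    have hlt : (s + x - v) %% x < x by rewrite ltn_mod; lia.
    set u := (s + x - v) %% x in hne hsum hlt *.
    have -> : minn u v + maxn u v = u + v by lia.
    rewrite hsum.
    have -> : (s == 0) = false by apply/eqP; lia.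
    have -> : (s == 1) = false by apply/eqP; lia.
    by split.
Qed.

Definition hcol t' s : 'I_t'.+1 := inord ((s - 2) %% t'.+1).
Definition cfun x t' : edge_coloring x t'.+1 := fun S =>
  if [pick p : 'I_x * 'I_x | S == [set p.1; p.2]] is Some p
  then hcol t' (Lm x p.1 p.2) else ord0.

Lemma set2_eq (T : finType) (a b u v : T) : [set a; b] = [set u; v] ->
  (a = u /\ b = v) \/ (a = v /\ b = u).
Proof.
move=> H.
have ha : a \in [set u; v] by rewrite -H set21.
have hb : b \in [set u; v] by rewrite -H set22.
have hu : u \in [set a; b] by rewrite H set21.
have hv : v \in [set a; b] by rewrite H set22.
move: ha hb hu hv; rewrite !inE => /orP [] /eqP -> /orP [] /eqP ->.
- by move=> _ /orP [] /eqP ->; left.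
- by left.
- by right.
- by move=> /orP [] /eqP ->; right.
Qed.

Lemma cfunE x t' (u v : 'I_x) : cfun t' [set u; v] = hcol t' (Lm x u v).
Proof.
rewrite /cfun; case: pickP => [p /eqP H | H]; last by have := H (u, v); rewrite eqxx.
case: (set2_eq H) => [[-> ->] | [-> ->]] //.
by rewrite /Lm minnC maxnC.
Qed.

Lemma main x' t' q r : 2 <= r -> r <= t' -> x'.+1 = t'.+1 * q + r -> odd x'.+1 ->
  forall (v : 'I_x'.+1) (i : 'I_t'.+1), q <= color_degree (@cfun x'.+1 t') v i.
Proof.
move=> hr1 hr2 hx hodd v i.
set x := x'.+1 in hx hodd *.
set t := t'.+1 in hx *.
set m := x./2.
have hxm : x = 2 * m + 1.
  have := odd_double_half x; rewrite hodd -mul2n /m; lia.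
have hs : forall j : 'I_q, 2 <= 2 + i + t * j < x.
  move=> j; have : t * j.+1 <= t * q by rewrite leq_mul2l ltn_ord orbT.
  rewrite mulnS; have := ltn_ord i; rewrite -/t; lia.
pose F (j : 'I_q) : 'I_x := inord (nb x v (2 + i + t * j)).
have FE : forall j, nat_of_ord (F j) = nb x v (2 + i + t * j).
  move=> j; rewrite /F inordK //.
  by case/andP: (hs j) => h1 h2; case: (nb_spec hxm (ltn_ord v) h1 h2).
have Finj : injective F.
  move=> j1 j2 E.
  have E' : (nat_of_ord (F j1) + v) %% x = (nat_of_ord (F j2) + v) %% x by rewrite E.
  rewrite !FE in E'.
  case/andP: (hs j1) => h11 h12; case/andP: (hs j2) => h21 h22.
  case: (nb_spec hxm (ltn_ord v) h11 h12) => _ _ S1 _.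
  case: (nb_spec hxm (ltn_ord v) h21 h22) => _ _ S2 _.
  rewrite S1 S2 in E'.
  have : 2 + i + t * j1 = 2 + i + t * j2.
    move: E'; case: eqP => e1; case: eqP => e2; rewrite -?e1 -?e2 //;
      case: (v <= m) => /=; lia.
  move=> /eqP; rewrite eqn_add2l eqn_mul2l /= => /eqP h.
  exact: val_inj.
have Fin : forall j, F j \in [set u : 'I_x | (u != v) && (@cfun x t' [set u; v] == i)].
  move=> j; rewrite inE.
  case/andP: (hs j) => h1 h2.
  case: (nb_spec hxm (ltn_ord v) h1 h2) => _ hne _ hL.
  apply/andP; split.
    by apply/eqP => E; move/eqP: hne; apply; rewrite -FE E.
  rewrite cfunE FE hL; apply/eqP/val_inj; rewrite /hcol /= inordK.
    have -> : 2 + i + t * j - 2 = j * t'.+1 + i by rewrite /t; lia.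
    by rewrite modnMDl modn_small.
  by rewrite ltn_mod.
rewrite /color_degree.
have <- : #|F @: [set: 'I_q]| = q by rewrite card_imset // cardsT card_ord.
apply: subset_leq_card; apply/subsetP => y /imsetP [j _ ->]; exact: Fin.
Qed.

Theorem lemma2 (t q r : nat) (x : nat) :
  2 <= r -> r <= t - 1 -> x = t * q + r -> odd x ->
  exists c : edge_coloring x t,
    forall (v : 'I_x) (i : 'I_t), q <= color_degree c v i.
Proof.
move=> hr1 hr2 hx hodd.
case: t hr2 hx => [|t'] hr2 hx; first by lia.
case: x hx hodd => [|x'] hx hodd; first by [].
exists (@cfun x'.+1 t').
apply: main hr1 _ hx hodd; lia.
Qed.
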